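(* Let $D=\{D_1,\dots,D_n\}$ be a set of pairwise disjoint closed balls in $\mathbb{R}^d$ and $s>0$. The set $W$ output by the algorithm ComputeWSPD$(D,s)$ described below is a WSPD for $D$ with respect to $s$.
   Context: Ball $D_i$ has center $c_i$ and radius $r_i\ge0$. $R(X)$ is the smallest axis-parallel box containing $X$, $L_{\max}(R)$ its longest side length; for balls $C,C'$ with centers $c,c'$ and radii $r,r'$, $d(C,C')=|cc'|-(r+r')$. Point-set well-separation: finite $P,Q$ are $s$-well-separated if there are disjoint balls $C_P\supseteq R(P)$, $C_Q\supseteq R(Q)$ of equal radius $\rho$ with $d(C_P,C_Q)\ge s\rho$. Ball well-separation: for $X\subseteq D$ let $X'=\{c_i:D_i\in X\}$; nonempty $A,B\subseteq D$ are $s$-well-separated if there are disjoint balls $C_{A'}\supseteq R(A')$, $C_{B'}\supseteq R(B')$ of equal radius with one of: (i) $|A|=|B|=1$; (ii) $A=\{D_k\}$, $|B|>1$, $d(c_k,C_{B'})-r_k\ge(3s+4)\mathrm{radius}(C_{B'})$; (iii) symmetric to (ii); (iv) $|A|,|B|>1$ and $d(C_{A'},C_{B'})\ge(3s+4)\mathrm{radius}(C_{A'})$ (if all balls of $A\cup B$ have radius $0$, the point-set notion for $A',B'$ is used instead). A WSPD for $D$ w.r.t. $s$ is a set of pairs $\{A_i,B_i\}$ of nonempty subsets of $D$, each $s$-well-separated, such that every two distinct balls $D_p,D_q$ are separated (one in $A_i$, other in $B_i$) by exactly one pair. Algorithm ComputeWSPD$(D,s)$: let $F=\{c_1,\dots,c_n\}$;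 let $T$ be a (Callahan–Kosaraju) split tree of $F$: a binary tree whose leaves are the points of $F$, each node $u$ storing $R(S_u)$ where $S_u$ is the set of points at leaves of the subtree of $u$; let $W'$ be the WSPD of $F$ w.r.t. $3s+6$ computed from $T$ by the Callahan–Kosaraju algorithm (each pair is $\{S_v,S_w\}$ for nodes $v,w$ of $T$). For $X'\subseteq F$ let $X$ denote the set of balls whose centers lie in $X'$. Start with $W=\emptyset$; for each $\{A',B'\}\in W'$: if $|A'|=|B'|=1$ or $|A'|,|B'|>1$, add $\{A,B\}$ to $W$; otherwise, say $A'=\{c_k\}=S_v$ ($v$ a leaf) and $B'=S_w$, add to $W$ the pairs produced by FindPairs$(v,w)$. FindPairs$(v,w)$ with $S_v=\{c_k\}$: let $C_w$ be the ball of radius $(\sqrt d/2)L_{\max}(R(S_w))$ centered at the center of $R(S_w)$; if $d(c_k,C_w)-r_k\ge(3s+4)\,\mathrm{radius}(C_w)$, return the single pair $\{\{D_k\},\text{balls with centers in }S_w\}$; otherwise return the union of FindPairs$(v,w_l)$ and FindPairs$(v,w_r)$ for the two children $w_l,w_r$ of $w$. *)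

(* Defs.v *)
From HB Require Import structures.
From mathcomp Require Import all_boot all_order all_algebra.
From mathcomp Require Import reals.
Set Implicit Arguments. Unset Strict Implicit. Unset Printing Implicit Defensive.
Import Order.TTheory GRing.Theory Num.Theory.
Local Open Scope ring_scope.

(* Points of R^d are row vectors 'rV[R]_d; coordinate k of x is x ord0 k. *)

Definition edist (R : realType) (d : nat) (x y : 'rV[R]_d) : R :=
  Num.sqrt (\sum_(k < d) (x ord0 k - y ord0 k) ^+ 2).

Definition balls_disjoint (R : realType) (d : nat)
    (p : 'rV[R]_d) (rho : R) (q : 'rV[R]_d) (rho' : R) : Prop :=
  forall x : 'rV[R]_d, ~ (edist x p <= rho /\ edist x q <= rho').

(* x lies in R(X'), the smallest axis-parallel box containing the
   (nonempty) point set X' = {c_i : i in X}. *)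
Definition in_box (R : realType) (d n : nat) (c : 'I_n -> 'rV[R]_d)
    (X : {set 'I_n}) (x : 'rV[R]_d) : Prop :=
  forall k : 'I_d,
    (exists2 i, i \in X & c i ord0 k <= x ord0 k) /\
    (exists2 j, j \in X & x ord0 k <= c j ord0 k).

Definition ball_contains_box (R : realType) (d n : nat) (c : 'I_n -> 'rV[R]_d)
    (X : {set 'I_n}) (p : 'rV[R]_d) (rho : R) : Prop :=
  forall x, in_box c X x -> edist x p <= rho.

Definition pt_well_sep (R : realType) (d n : nat) (s : R)
    (c : 'I_n -> 'rV[R]_d) (P Q : {set 'I_n}) : Prop :=
  exists (p q : 'rV[R]_d) (rho : R),
    [/\ 0 <= rho, ball_contains_box c P p rho, ball_contains_box c Q q rho,
        balls_disjoint p rho q rho & s * rho <= edist p q - (rho + rho)].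

(* Ball s-well-separation of A = {D_i : i in A}, B = {D_i : i in B}
   (balls D_i with center c i and radius r i). *)
Definition ball_well_sep (R : realType) (d n : nat) (s : R)
    (c : 'I_n -> 'rV[R]_d) (r : 'I_n -> R) (A B : {set 'I_n}) : Prop :=
  if [forall i in A :|: B, r i == 0] then pt_well_sep s c A B
  else exists (p q : 'rV[R]_d) (rho : R),
    [/\ 0 <= rho, ball_contains_box c A p rho, ball_contains_box c B q rho,
        balls_disjoint p rho q rho &
        [\/ #|A| = 1%N /\ #|B| = 1%N,
            exists k, [/\ A = [set k], (1 < #|B|)%N &
                (3 * s + 4) * rho <= edist (c k) q - rho - r k],
            exists k, [/\ B = [set k], (1 < #|A|)%N &
                (3 * s + 4) * rho <= edist (c k) p - rho - r k]
          | [/\ (1 < #|A|)%N, (1 < #|B|)%N &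
                (3 * s + 4) * rho <= edist p q - (rho + rho)]]].

Definition separates (n : nat) (pr : {set 'I_n} * {set 'I_n}) (p q : 'I_n) : bool :=
  ((p \in pr.1) && (q \in pr.2)) || ((p \in pr.2) && (q \in pr.1)).

Definition separates_exactly_once (n : nat) (W : seq ({set 'I_n} * {set 'I_n})) : Prop :=
  forall p q : 'I_n, p != q -> count (fun pr => separates pr p q) W = 1%N.

Definition pt_WSPD (R : realType) (d n : nat) (s : R) (c : 'I_n -> 'rV[R]_d)
    (W : seq ({set 'I_n} * {set 'I_n})) : Prop :=
  (forall pr, pr \in W -> [/\ pr.1 != set0, pr.2 != set0 & pt_well_sep s c pr.1 pr.2])
  /\ separates_exactly_once W.

Definition ball_WSPD (R : realType) (d n : nat) (s : R) (c : 'I_n -> 'rV[R]_d)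
    (r : 'I_n -> R) (W : seq ({set 'I_n} * {set 'I_n})) : Prop :=
  (forall pr, pr \in W -> [/\ pr.1 != set0, pr.2 != set0 & ball_well_sep s c r pr.1 pr.2])
  /\ separates_exactly_once W.

Inductive stree (n : nat) : Type :=
| SLeaf of 'I_n
| SNode of stree n & stree n.
Arguments SLeaf {n}.
Arguments SNode {n}.

Fixpoint leaves (n : nat) (t : stree n) : seq 'I_n :=
  match t with SLeaf i => [:: i] | SNode l r => leaves l ++ leaves r end.

Definition leafset (n : nat) (t : stree n) : {set 'I_n} := [set i in leaves t].

Fixpoint subtree (n : nat) (u t : stree n) : Prop :=
  u = t \/ match t with SLeaf _ => False | SNode l r => subtree u l \/ subtree u r end.

Definition bmin (R : realType) (d n : nat) (c : 'I_n -> 'rV[R]_d)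
    (X : {set 'I_n}) (k : 'I_d) : R :=
  match [pick i in X] with
  | Some i0 => \big[Num.min/c i0 ord0 k]_(i in X) c i ord0 k
  | None => 0 end.
Definition bmax (R : realType) (d n : nat) (c : 'I_n -> 'rV[R]_d)
    (X : {set 'I_n}) (k : 'I_d) : R :=
  match [pick i in X] with
  | Some i0 => \big[Num.max/c i0 ord0 k]_(i in X) c i ord0 k
  | None => 0 end.

Definition Lmax (R : realType) (d n : nat) (c : 'I_n -> 'rV[R]_d) (X : {set 'I_n}) : R :=
  \big[Num.max/0]_(k < d) (bmax c X k - bmin c X k).

Definition bcenter (R : realType) (d n : nat) (c : 'I_n -> 'rV[R]_d) (X : {set 'I_n})
  : 'rV[R]_d := \row_k ((bmin c X k + bmax c X k) / 2).

(* FindPairs(v,w) where S_v = {c_k}. The paper leaves the case "w is a leaf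
   and the test fails" unspecified (it cannot occur for disjoint balls);
   we return no pair there. *)
Fixpoint find_pairs (R : realType) (d n : nat) (s : R) (c : 'I_n -> 'rV[R]_d)
    (r : 'I_n -> R) (k : 'I_n) (w : stree n) : seq ({set 'I_n} * {set 'I_n}) :=
  let Sw := leafset w in
  let rho := Num.sqrt (d%:R) / 2 * Lmax c Sw in
  if (3 * s + 4) * rho <= edist (c k) (bcenter c Sw) - rho - r k
  then [:: ([set k], Sw)]
  else match w with
       | SLeaf _ => [::]
       | SNode wl wr => find_pairs s c r k wl ++ find_pairs s c r k wr
       end.

Definition process_pair (R : realType) (d n : nat) (s : R) (c : 'I_n -> 'rV[R]_d)
    (r : 'I_n -> R) (vw : stree n * stree n) : seq ({set 'I_n} * {set 'I_n}) :=
  let A := leafset vw.1 in let B := leafset vw.2 in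
  if ((#|A| == 1%N) && (#|B| == 1%N)) || ((1 < #|A|)%N && (1 < #|B|)%N)
  then [:: (A, B)]
  else match vw with
       | (SLeaf k, w) => find_pairs s c r k w
       | (v, SLeaf k) => find_pairs s c r k v
       | _ => [::]
       end.

(* ComputeWSPD(D,s), given the split tree's WSPD W' of F w.r.t. 3s+6. *)
Definition compute_wspd (R : realType) (d n : nat) (s : R) (c : 'I_n -> 'rV[R]_d)
    (r : 'I_n -> R) (W' : seq (stree n * stree n)) : seq ({set 'I_n} * {set 'I_n}) :=
  flatten [seq process_pair s c r vw | vw <- W'].

Fixpoint pairs_of_nodes (n : nat) (T : stree n) (W' : seq (stree n * stree n)) : Prop :=
  match W' with
  | [::] => True
  | vw :: W => (subtree vw.1 T /\ subtree vw.2 T) /\ pairs_of_nodes T W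
  end.

(* Main.v *)
Require Import Defs.
From HB Require Import structures.
From mathcomp Require Import all_boot all_order all_algebra.
From mathcomp Require Import reals.
From mathcomp Require Import ring lra.
Import Order.TTheory GRing.Theory Num.Theory.
Local Open Scope ring_scope.

Lemma edist_ge0 (R : realType) (d : nat) (x y : 'rV[R]_d) : 0 <= edist x y.
Proof. exact: sqrtr_ge0. Qed.

Lemma edist_sym (R : realType) (d : nat) (x y : 'rV[R]_d) : edist x y = edist y x.
Proof. by rewrite /edist; congr Num.sqrt; apply: eq_bigr => k _; rewrite -sqrrN opprB. Qed.

Lemma edist_xx (R : realType) (d : nat) (x : 'rV[R]_d) : edist x x = 0.
Proof. by rewrite /edist big1 ?sqrtr0 // => k _; rewrite subrr expr0n. Qed.

Lemma sumsq_ge0 (R : realType) (d : nat) (x y : 'rV[R]_d) :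
  0 <= \sum_(k < d) (x ord0 k - y ord0 k) ^+ 2.
Proof. by apply: sumr_ge0 => k _; exact: sqr_ge0. Qed.

Lemma edist_le (R : realType) (d : nat) (x y : 'rV[R]_d) rho : 0 <= rho ->
  (edist x y <= rho) = (\sum_(k < d) (x ord0 k - y ord0 k) ^+ 2 <= rho ^+ 2).
Proof.
move=> Hr; rewrite /edist -{1}(ger0_norm Hr) -sqrtr_sqr ler_sqrt //; exact: sqr_ge0.
Qed.

Lemma edist_le0 (R : realType) (d : nat) (x y : 'rV[R]_d) : edist x y <= 0 -> x = y.
Proof.
rewrite edist_le // expr0n /= => H.
have H0 : \sum_(k < d) (x ord0 k - y ord0 k) ^+ 2 = 0.
  by apply/le_anti; rewrite H sumsq_ge0.
apply/rowP => i.
have := psumr_eq0P (fun k _ => sqr_ge0 (x ord0 k - y ord0 k)) H0.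
by move=> /(_ i isT) /eqP; rewrite sqrf_eq0 subr_eq0 => /eqP.
Qed.

Lemma edist_tri2 (R : realType) (d : nat) (x p q : 'rV[R]_d) rho :
  edist x p <= rho -> edist x q <= rho -> edist p q <= 2 * rho.
Proof.
move=> Hp Hq; have Hr : 0 <= rho by apply: le_trans Hp; exact: edist_ge0.
move: Hp Hq; rewrite !edist_le ?mulr_ge0 // => Hp Hq.
apply: (le_trans (y := 2 * \sum_(k < d) (x ord0 k - p ord0 k) ^+ 2 + 2 * \sum_(k < d) (x ord0 k - q ord0 k) ^+ 2)).
  rewrite !mulr_sumr -big_split /=; apply: ler_sum => k _.
  rewrite -subr_ge0.
  have -> : 2 * (x ord0 k - p ord0 k) ^+ 2 + 2 * (x ord0 k - q ord0 k) ^+ 2 -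
     (p ord0 k - q ord0 k) ^+ 2 = (p ord0 k + q ord0 k - 2 * x ord0 k) ^+ 2 by ring.
  exact: sqr_ge0.
have -> : (2 * rho) ^+ 2 = 2 * rho ^+ 2 + 2 * rho ^+ 2 by ring.
by apply: lerD; apply: ler_wpM2l.
Qed.
Lemma bigmin_le_seq (R : realType) (I : eqType) (l : seq I) (P : pred I) (F : I -> R) x0 i :
  i \in l -> P i -> \big[Num.min/x0]_(j <- l | P j) F j <= F i.
Proof.
elim: l => // a l IH; rewrite in_cons big_cons => /orP [/eqP <-|Hi] Pi.
  by rewrite Pi ge_min lexx.
case: (P a); last exact: IH.
by rewrite ge_min IH ?orbT.
Qed.

Lemma bigmax_ge_seq (R : realType) (I : eqType) (l : seq I) (P : pred I) (F : I -> R) x0 i :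
  i \in l -> P i -> F i <= \big[Num.max/x0]_(j <- l | P j) F j.
Proof.
elim: l => // a l IH; rewrite in_cons big_cons => /orP [/eqP <-|Hi] Pi.
  by rewrite Pi le_max lexx.
case: (P a); last exact: IH.
by rewrite le_max IH ?orbT.
Qed.

Lemma bigmin_le (R : realType) (I : finType) (P : pred I) (F : I -> R) x0 i :
  P i -> \big[Num.min/x0]_(j | P j) F j <= F i.
Proof. by move=> Pi; apply: bigmin_le_seq => //; rewrite mem_index_enum. Qed.

Lemma bigmax_ge (R : realType) (I : finType) (P : pred I) (F : I -> R) x0 i :
  P i -> F i <= \big[Num.max/x0]_(j | P j) F j.
Proof. by move=> Pi; apply: bigmax_ge_seq => //; rewrite mem_index_enum. Qed.

Lemma bigmax_ge0 (R : realType) (I : finType) (P : pred I) (F : I -> R) :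
  0 <= \big[Num.max/0]_(j | P j) F j.
Proof.
rewrite /index_enum; elim: (Finite.enum I) => [|a l IH]; first by rewrite big_nil.
by rewrite big_cons; case: (P a) => //; rewrite le_max IH orbT.
Qed.

Lemma bmin_le (R : realType) (d n : nat) (c : 'I_n -> 'rV[R]_d) (X : {set 'I_n}) (k : 'I_d) (i : 'I_n) :
  i \in X -> bmin c X k <= c i ord0 k.
Proof.
move=> Hi; rewrite /bmin; case: pickP => [i0 _|H]; first exact: bigmin_le.
by move: (H i); rewrite Hi.
Qed.

Lemma bmax_ge (R : realType) (d n : nat) (c : 'I_n -> 'rV[R]_d) (X : {set 'I_n}) (k : 'I_d) (i : 'I_n) :
  i \in X -> c i ord0 k <= bmax c X k.
Proof.
move=> Hi; rewrite /bmax; case: pickP => [i0 _|H]; first exact: (@bigmax_ge _ _ _ (fun j => c j ord0 k)).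
by move: (H i); rewrite Hi.
Qed.

Lemma Lmax_ge0 (R : realType) (d n : nat) (c : 'I_n -> 'rV[R]_d) (X : {set 'I_n}) : 0 <= Lmax c X.
Proof. exact: bigmax_ge0. Qed.

Lemma Lmax_ge (R : realType) (d n : nat) (c : 'I_n -> 'rV[R]_d) (X : {set 'I_n}) (k : 'I_d) :
  bmax c X k - bmin c X k <= Lmax c X.
Proof. exact: (@bigmax_ge _ _ _ (fun k => bmax c X k - bmin c X k)). Qed.

Lemma Lmax1 (R : realType) (d n : nat) (c : 'I_n -> 'rV[R]_d) (j : 'I_n) : Lmax c [set j] = 0.
Proof.
have E : forall k, bmin c [set j] k = c j ord0 k /\ bmax c [set j] k = c j ord0 k.
  move=> k; rewrite /bmin /bmax; case: pickP => [i0 Hi0|H]; last by move: (H j); rewrite inE eqxx.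
  move: Hi0; rewrite inE => /eqP ->; split; apply/le_anti/andP; split.
  - by apply: bigmin_le; rewrite inE.
  - by apply: (big_ind (fun y => c j ord0 k <= y)) => // [x y Hx Hy|i]; [rewrite le_min Hx | rewrite inE => /eqP ->].
  - by apply: (big_ind (fun y => y <= c j ord0 k)) => // [x y Hx Hy|i]; [rewrite ge_max Hx | rewrite inE => /eqP ->].
  - by apply: (@bigmax_ge _ _ _ (fun j => c j ord0 k)); rewrite inE.
apply/le_anti; rewrite Lmax_ge0 andbT /Lmax.
apply: (big_ind (fun y => y <= 0)) => // [x y Hx Hy|k _]; first by rewrite ge_max Hx.
by case: (E k) => -> ->; rewrite subrr.
Qed.

Lemma box_in_ball (R : realType) (d n : nat) (c : 'I_n -> 'rV[R]_d) (X : {set 'I_n}) x :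
  in_box c X x -> edist x (bcenter c X) <= Num.sqrt (d%:R) / 2 * Lmax c X.
Proof.
move=> Hb; set L := Lmax c X.
have HL : 0 <= L by apply: Lmax_ge0.
rewrite edist_le; last by rewrite mulr_ge0 ?divr_ge0 ?sqrtr_ge0.
apply: (le_trans (y := \sum_(k < d) (L / 2) ^+ 2)).
  apply: ler_sum => k _; rewrite /bcenter mxE.
  have [[i Hi Hik] [j Hj Hjk]] := Hb k.
  have h1 := le_trans (bmin_le _ _ _ _ _ k _ Hi) Hik.
  have h2 := le_trans Hjk (bmax_ge _ _ _ _ _ k _ Hj).
  have h3 := Lmax_ge _ _ _ c X k; rewrite -/L in h3.
  rewrite -subr_ge0.
  set a := x ord0 k in h1 h2 *; set u := bmin c X k in h1 h2 h3 *; set v := bmax c X k in h1 h2 h3 *.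
  have -> : (L / 2) ^+ 2 - (a - (u + v) / 2) ^+ 2 = (L / 2 - (a - (u + v) / 2)) * (L / 2 + (a - (u + v) / 2)) by ring.
  apply: mulr_ge0; lra.
rewrite sumr_const card_ord.
have Ht := sqr_sqrtr (ler0n R d).
set t := Num.sqrt _ in Ht *.
rewrite -[_ *+ d]mulr_natl -Ht; rewrite le_eqVlt; apply/orP; left; apply/eqP; ring.
Qed.

Lemma leafset_leaf (n : nat) (k : 'I_n) : leafset (SLeaf k) = [set k].
Proof. by apply/setP => i; rewrite !inE. Qed.

Lemma leafset_node (n : nat) (l r : stree n) : leafset (SNode l r) = leafset l :|: leafset r.
Proof. by apply/setP => i; rewrite !inE /= mem_cat. Qed.

Lemma leaves_nil (n : nat) (t : stree n) : leaves t != [::].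
Proof. by elim: t => //= l IHl r _; case: (leaves l) IHl. Qed.

Lemma leafset_neq0 (n : nat) (t : stree n) : leafset t != set0.
Proof.
apply/set0Pn; have := leaves_nil _ t; case E: (leaves t) => [|a l] // _.
by exists a; rewrite inE E mem_head.
Qed.

Lemma card_leafset (n : nat) (t : stree n) : uniq (leaves t) -> #|leafset t| = size (leaves t).
Proof. by move=> U; rewrite /leafset cardsE; apply/card_uniqP. Qed.

Lemma size_leaves_node (n : nat) (l r : stree n) : (1 < size (leaves (SNode l r)))%N.
Proof.
rewrite /= size_cat; have := leaves_nil _ l; have := leaves_nil _ r.
by case: (leaves l) => [|a s]; case: (leaves r) => [|b t] //= _ _; rewrite addnS.
Qed.

Lemma subtree_uniq (n : nat) (u t : stree n) : subtree u t -> uniq (leaves t) -> uniq (leaves u).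
Proof.
elim: t => [i|l IHl r IHr] /= [-> //|] //.
by rewrite cat_uniq => -[H|H] /and3P [Ul _ Ur]; [apply: IHl | apply: IHr].
Qed.

Lemma disj_neq (R : realType) (d n : nat) (c : 'I_n -> 'rV[R]_d) (r : 'I_n -> R) :
  (forall i, 0 <= r i) ->
  (forall i j, i != j -> balls_disjoint (c i) (r i) (c j) (r j)) ->
  forall i j, i != j -> c i <> c j.
Proof.
move=> Hr Hd i j Hij E; apply: (Hd i j Hij (c i)).
by rewrite edist_xx -E edist_xx !Hr.
Qed.

Lemma in_box_self (R : realType) (d n : nat) (c : 'I_n -> 'rV[R]_d) (X : {set 'I_n}) i :
  i \in X -> in_box c X (c i).
Proof. by move=> Hi k; split; exists i. Qed.

Lemma in_box1 (R : realType) (d n : nat) (c : 'I_n -> 'rV[R]_d) (k : 'I_n) x :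
  in_box c [set k] x -> x = c k.
Proof.
move=> H; apply/rowP => j; have [[i Hi H1] [i' Hi' H2]] := H j.
move: Hi Hi'; rewrite !inE => /eqP E /eqP E'; subst i i'.
by apply/le_anti; rewrite H1 H2.
Qed.

Lemma pt_disj (R : realType) (d n : nat) (s : R) (c : 'I_n -> 'rV[R]_d) (A B : {set 'I_n}) :
  pt_well_sep s c A B -> forall i, i \in A -> i \in B -> False.
Proof.
move=> [p [q [rho [_ hA hB hd _]]]] i HA HB.
by apply: (hd (c i)); split; [apply: hA | apply: hB]; apply: in_box_self.
Qed.

Definition fp_test (R : realType) (d n : nat) (s : R) (c : 'I_n -> 'rV[R]_d)
    (r : 'I_n -> R) (k : 'I_n) (B : {set 'I_n}) : bool :=
  (3 * s + 4) * (Num.sqrt (d%:R) / 2 * Lmax c B) <=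
     edist (c k) (bcenter c B) - (Num.sqrt (d%:R) / 2 * Lmax c B) - r k.

Arguments fp_test {R d n} s c r k B.
Arguments edist_tri2 {R d x p q rho}.
Arguments edist_le0 {R d x y}.
Arguments disj_neq {R d n c r}.
Arguments in_box_self {R d n c X i}.
Arguments in_box1 {R d n c k x}.
Arguments box_in_ball {R d n c X x}.

Lemma fp_sep (R : realType) (d n : nat) (c : 'I_n -> 'rV[R]_d) (r : 'I_n -> R) (s : R) :
  (forall i, 0 <= r i) ->
  (forall i j, i != j -> balls_disjoint (c i) (r i) (c j) (r j)) ->
  0 < s ->
  forall k B, B != set0 -> k \notin B -> fp_test s c r k B ->
  ball_well_sep s c r [set k] B.
Proof.
move=> Hr Hd Hs k B HB0 HkB Ht.
move: Ht; rewrite /fp_test.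
set rho := Num.sqrt (d%:R) / 2 * Lmax c B; set q := bcenter c B => Ht.
have Hrho : 0 <= rho by rewrite mulr_ge0 ?divr_ge0 ?sqrtr_ge0 ?Lmax_ge0.
have HA : ball_contains_box c [set k] (c k) rho.
  by move=> x /in_box1 ->; rewrite edist_xx.
have HB : ball_contains_box c B q rho by move=> x Hx; apply: box_in_ball.
have Hrk := Hr k.
have Hsr : 0 <= s * rho by rewrite mulr_ge0 // ltW.
have HD : balls_disjoint (c k) rho q rho.
  move=> x [h1 h2]; have := edist_tri2 h1 h2.
  move: Hrho; rewrite le_eqVlt => /orP [/eqP E|Hp].
    rewrite -E mulr0 => /edist_le0 Ekq.
    case/set0Pn: HB0 => j Hj.
    have : edist (c j) q <= 0 by rewrite E; apply: HB; apply: in_box_self.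
    move/edist_le0; rewrite -Ekq; apply: (disj_neq Hr Hd).
    by apply/eqP => Ejk; move: HkB; rewrite -Ejk Hj.
  have Hsr' : 0 < s * rho by rewrite mulr_gt0.
  move=> H; have : edist (c k) q <= 2 * rho by [].
  nra.
rewrite /ball_well_sep; case: ifP => _.
  exists (c k), q, rho; split => //; nra.
exists (c k), q, rho; split => //.
have : (0 < #|B|)%N by rewrite card_gt0.
case: (ltngtP #|B| 1) => // [|E] _.
  by move=> H; apply: Or42; exists k; split.
by apply: Or41; rewrite cards1.
Qed.

Lemma dp_sep (R : realType) (d n : nat) (c : 'I_n -> 'rV[R]_d) (r : 'I_n -> R) (s : R) :
  0 < s -> forall A B, pt_well_sep (3 * s + 6) c A B ->
  ((#|A| == 1%N) && (#|B| == 1%N)) || ((1 < #|A|)%N && (1 < #|B|)%N) ->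
  ball_well_sep s c r A B.
Proof.
move=> Hs A B [p [q [rho [H0 hA hB hD Hsep]]]] Hc.
have Hsr : 0 <= s * rho by rewrite mulr_ge0 // ltW.
rewrite /ball_well_sep; case: ifP => _.
  exists p, q, rho; split => //; nra.
exists p, q, rho; split => //.
case/orP: Hc => /andP [H1 H2].
  by apply: Or41; split; apply/eqP.
by apply: Or44; split => //; nra.
Qed.

Lemma fp_eq (R : realType) (d n : nat) (s : R) (c : 'I_n -> 'rV[R]_d) (r : 'I_n -> R) k w :
  find_pairs s c r k w =
  if fp_test s c r k (leafset w) then [:: ([set k], leafset w)]
  else match w with
       | SLeaf _ => [::]
       | SNode wl wr => find_pairs s c r k wl ++ find_pairs s c r k wr
       end.
Proof. by case: w. Qed.

Lemma fp_wellsep (R : realType) (d n : nat) (c : 'I_n -> 'rV[R]_d) (r : 'I_n -> R) (s : R) :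
  (forall i, 0 <= r i) ->
  (forall i j, i != j -> balls_disjoint (c i) (r i) (c j) (r j)) ->
  0 < s ->
  forall k w, k \notin leafset w -> forall pr, pr \in find_pairs s c r k w ->
  [/\ pr.1 != set0, pr.2 != set0 & ball_well_sep s c r pr.1 pr.2].
Proof.
move=> Hr Hd Hs k; elim=> [j|l IHl rr IHr] Hk pr; rewrite fp_eq; case: ifP => Ht.
- rewrite inE => /eqP -> /=; split; first by apply/set0Pn; exists k; rewrite inE.
    exact: leafset_neq0.
  by apply: fp_sep => //; apply: leafset_neq0.
- by [].
- rewrite inE => /eqP -> /=; split; first by apply/set0Pn; exists k; rewrite inE.
    exact: leafset_neq0.
  by apply: fp_sep => //; apply: leafset_neq0.
- move: Hk; rewrite leafset_node inE negb_or => /andP [Hkl Hkr].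
  by rewrite mem_cat => /orP [H|H]; [apply: IHl | apply: IHr].
Qed.

Lemma leaf_test (R : realType) (d n : nat) (c : 'I_n -> 'rV[R]_d) (r : 'I_n -> R) (s : R) :
  (forall i, 0 <= r i) ->
  (forall i j, i != j -> balls_disjoint (c i) (r i) (c j) (r j)) ->
  forall k j, k != j -> fp_test s c r k [set j].
Proof.
move=> Hr Hd k j Hkj; rewrite /fp_test Lmax1 mulr0 mulr0 subr0.
have : edist (c j) (bcenter c [set j]) <= 0.
  by rewrite -(mulr0 (Num.sqrt (d%:R) / 2)) -(Lmax1 _ _ _ c j); apply: box_in_ball; apply: in_box_self; rewrite inE.
move/edist_le0 <-; rewrite subr_ge0 leNgt; apply/negP => H.
apply: (Hd k j Hkj (c j)); split; first by rewrite edist_sym ltW.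
by rewrite edist_xx.
Qed.

Lemma sep_split (n : nat) (k p q : 'I_n) (A B : {set 'I_n}) :
  k \notin A -> k \notin B -> (forall i, i \in A -> i \in B -> False) ->
  separates ([set k], A :|: B) p q =
  (separates ([set k], A) p q + separates ([set k], B) p q)%N :> nat.
Proof.
move=> HA HB HAB; rewrite /separates /= !inE.
case: (eqVneq p k) => [->|Hp]; case: (eqVneq q k) => [->|Hq] /=;
  rewrite ?(negbTE HA) ?(negbTE HB) //=.
- by case Hb: (q \in B); case Ha: (q \in A) => //; case: (HAB q).
- by case Hb: (p \in B); case Ha: (p \in A) => //; case: (HAB p).
- by rewrite !andbF.
Qed.

Lemma fp_count (R : realType) (d n : nat) (c : 'I_n -> 'rV[R]_d) (r : 'I_n -> R) (s : R) :
  (forall i, 0 <= r i) ->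
  (forall i j, i != j -> balls_disjoint (c i) (r i) (c j) (r j)) ->
  forall k w, uniq (leaves w) -> k \notin leafset w -> forall p q,
  count (fun pr => separates pr p q) (find_pairs s c r k w) =
  separates ([set k], leafset w) p q.
Proof.
move=> Hr Hd k; elim=> [j|l IHl rr IHr] Hu Hk p q; rewrite fp_eq; case: ifP => Ht.
- by rewrite /= addn0.
- move: Ht; rewrite leafset_leaf leaf_test //.
  by apply/eqP => E; move: Hk; rewrite E leafset_leaf inE eqxx.
- by rewrite /= addn0.
- move: Hu; rewrite /= cat_uniq => /and3P [Ul Hlr Ur].
  move: Hk; rewrite leafset_node inE negb_or => /andP [Hkl Hkr].
  rewrite count_cat IHl // IHr // sep_split //.
  move=> i; rewrite !inE => Hi1 Hi2; move/hasP: Hlr; apply; by exists i.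
Qed.

Lemma sep_sym (n : nat) (A B : {set 'I_n}) p q :
  separates (A, B) p q = separates (B, A) p q.
Proof. by rewrite /separates /= orbC. Qed.

Lemma pp_lemma (R : realType) (d n : nat) (c : 'I_n -> 'rV[R]_d) (r : 'I_n -> R) (s : R) :
  (forall i, 0 <= r i) ->
  (forall i j, i != j -> balls_disjoint (c i) (r i) (c j) (r j)) ->
  0 < s ->
  forall v w, uniq (leaves v) -> uniq (leaves w) ->
  pt_well_sep (3 * s + 6) c (leafset v) (leafset w) ->
  (forall pr, pr \in process_pair s c r (v, w) ->
     [/\ pr.1 != set0, pr.2 != set0 & ball_well_sep s c r pr.1 pr.2]) /\
  (forall p q, count (fun pr => separates pr p q) (process_pair s c r (v, w)) =
     separates (leafset v, leafset w) p q).
Proof.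
move=> Hr Hd Hs v w Uv Uw Hpt.
have Hdj := pt_disj _ _ _ _ _ _ _ Hpt.
rewrite /process_pair; case: ifP => Hc.
  split; last by move=> p q; rewrite /= addn0.
  move=> pr; rewrite inE => /eqP -> /=; split; try exact: leafset_neq0.
  exact: dp_sep.
case: v Uv Hpt Hdj Hc => [k|vl vr] Uv Hpt Hdj Hc; case: w Uw Hpt Hdj Hc => [j|wl wr] Uw Hpt Hdj Hc.
- by move: Hc; rewrite !leafset_leaf !cards1.
- have Hk : k \notin leafset (SNode wl wr).
    by apply/negP => H; apply: (Hdj k) => //; rewrite leafset_leaf inE.
  split; first exact: fp_wellsep.
  by move=> p q; rewrite fp_count // leafset_leaf.
- have Hk : j \notin leafset (SNode vl vr).
    by apply/negP => H; apply: (Hdj j) => //; rewrite leafset_leaf inE.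
  split; first exact: fp_wellsep.
  by move=> p q; rewrite fp_count // sep_sym leafset_leaf.
- by move: Hc; rewrite !card_leafset // (size_leaves_node _ vl vr) (size_leaves_node _ wl wr) orbT.
Qed.

Arguments pp_lemma {R d n c r s}.
Arguments subtree_uniq {n u t}.

Lemma pairs_of_nodes_cons (n : nat) (T : stree n) vw W :
  pairs_of_nodes T (vw :: W) -> (subtree vw.1 T /\ subtree vw.2 T) /\ pairs_of_nodes T W.
Proof. by []. Qed.

Lemma main_ind (R : realType) (d n : nat) (c : 'I_n -> 'rV[R]_d) (r : 'I_n -> R) (s : R)
    (T : stree n) :
  (forall i, 0 <= r i) ->
  (forall i j, i != j -> balls_disjoint (c i) (r i) (c j) (r j)) ->
  0 < s -> uniq (leaves T) ->
  forall W', pairs_of_nodes T W' ->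
  (forall pr, pr \in [seq (leafset vw.1, leafset vw.2) | vw <- W'] ->
     [/\ pr.1 != set0, pr.2 != set0 & pt_well_sep (3 * s + 6) c pr.1 pr.2]) ->
  (forall pr, pr \in compute_wspd s c r W' ->
     [/\ pr.1 != set0, pr.2 != set0 & ball_well_sep s c r pr.1 pr.2]) /\
  (forall p q, count (fun pr => separates pr p q) (compute_wspd s c r W') =
     count (fun pr => separates pr p q) [seq (leafset vw.1, leafset vw.2) | vw <- W']).
Proof.
move=> Hr Hd Hs HuT; elim=> [|[v w] W IH] //= [[Sv Sw] HW] Hpr.
have [_ _ Hpt] := Hpr _ (mem_head _ _).
have Hpr2 : forall pr, pr \in [seq (leafset vw.1, leafset vw.2) | vw <- W] -> [/\ pr.1 != set0, pr.2 != set0 & pt_well_sep (3 * s + 6) c pr.1 pr.2].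
  by move=> pr Hp0; apply: Hpr; rewrite in_cons Hp0 orbT.
have [IH1 IH2] := IH HW Hpr2.
have [P1 P2] := pp_lemma Hr Hd Hs v w (subtree_uniq Sv HuT) (subtree_uniq Sw HuT) Hpt.
split.
  by move=> pr; rewrite /compute_wspd /= mem_cat => /orP [H|H]; [apply: P1 | apply: IH1].
by move=> p q; rewrite /compute_wspd /= count_cat P2 -IH2.
Qed.

Arguments main_ind {R d n c r s T}.

Theorem lemma5 (R : realType) (d n : nat) (c : 'I_n -> 'rV[R]_d) (r : 'I_n -> R)
    (s : R) (T : stree n) (W' : seq (stree n * stree n)) :
  (forall i, 0 <= r i) ->
  (forall i j, i != j -> balls_disjoint (c i) (r i) (c j) (r j)) ->
  0 < s ->
  perm_eq (leaves T) (enum 'I_n) ->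
  pairs_of_nodes T W' ->
  pt_WSPD (3 * s + 6) c [seq (leafset vw.1, leafset vw.2) | vw <- W'] ->
  ball_WSPD s c r (compute_wspd s c r W').
Proof.
move=> Hr Hd Hs Hperm Hp [Hw1 Hw2].
have HuT : uniq (leaves T) by rewrite (perm_uniq Hperm) enum_uniq.
have [M1 M2] := main_ind Hr Hd Hs HuT W' Hp Hw1.
split => // p q Hpq; rewrite M2; exact: Hw2.
Qed.
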